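(* Consider the closed-loop system described in the context, with fixed matrices $A,E,C,D,B$ and gains $K_0,K_1,K_2$, and with $c(\sigma)=\|\sigma\|^{-1/2}+\alpha$ for a given $\alpha>0$. Let $v(\zeta)=\zeta^TS\zeta$ and $V(x)=x^TR(\sigma)PR(\sigma)x$. If the matrix inequality $$\begin{bmatrix} A^TS+SA+\rho S & \bullet \\ \alpha^{-1}G_0^TE^TS & -\rho P\end{bmatrix}<0$$ is satisfied for scalars $\alpha>0$, $\rho>0$ and symmetric matrices $S\in\mathbb{R}^{r\times r}$, $S>0$, $P\in\mathbb{R}^{2n\times 2n}$, $P>0$, then along arbitrary trajectories of the linear subsystem $\dot\zeta=A\zeta+E\sigma$ (with $\sigma=G_0x$) the inequality $$\dot v<\rho\,(V-v)$$ holds for all $0\neq\zeta\in\mathbb{R}^r$ and all $0\neq x\in\mathbb{R}^{2n}$.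
   Context: Closed-loop system: $\dot\zeta=A\zeta+E\sigma$, $\dot\sigma=C\zeta+D\sigma+Bu+f(t)$, $\dot\eta=c(\sigma)^2\sigma$, $u=K_0\zeta+c(\sigma)K_1\sigma+K_2\eta$, with $\zeta\in\mathbb{R}^r$, $\sigma,\eta\in\mathbb{R}^n$, $u\in\mathbb{R}^m$, $A\in\mathbb{R}^{r\times r}$ Hurwitz, $E\in\mathbb{R}^{r\times n}$, $C\in\mathbb{R}^{n\times r}$, $D\in\mathbb{R}^{n\times n}$, $B\in\mathbb{R}^{n\times m}$ of full row rank, $f:\mathbb{R}_+\to\mathbb{R}^n$ smooth, and $c(\sigma)=1/\sqrt{\|\sigma\|}+\alpha$, $\alpha>0$. Solutions are understood in the sense of Filippov. $BK_2$ is assumed nonsingular, $z=\eta+(BK_2)^{-1}f(t)$ and $x=[\sigma^T\ z^T]^T\in\mathbb{R}^{2n}$. $R(\sigma)=\mathrm{diag}(c(\sigma)I_n,I_n)$, $G_0=[I_n\ \ 0]\in\mathbb{R}^{n\times 2n}$ (so $\sigma=G_0x$). The symbol $\bullet$ denotes the symmetric block. $\|\cdot\|$ is the Euclidean norm. *)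

(* Defs.v *)
From mathcomp Require Import all_boot all_order all_algebra.
Set Implicit Arguments. Unset Strict Implicit. Unset Printing Implicit Defensive.
Import Order.TTheory GRing.Theory Num.Theory.
Local Open Scope ring_scope.

Section Defs.
Variable R : rcfType.

Definition qform (k : nat) (M : 'M[R]_k) (w : 'cV[R]_k) : R := (w^T *m M *m w) 0 0.

(* M > 0 : positive definite (symmetry is assumed separately) *)
Definition posdef (k : nat) (M : 'M[R]_k) : Prop :=
  forall w : 'cV[R]_k, w != 0 -> 0 < qform M w.

Definition negdef (k : nat) (M : 'M[R]_k) : Prop :=
  forall w : 'cV[R]_k, w != 0 -> qform M w < 0.

Definition enorm (k : nat) (s : 'cV[R]_k) : R := Num.sqrt ((s^T *m s) 0 0).

Definition G0 (n : nat) : 'M[R]_(n, n + n) := row_mx 1%:M 0.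

(* c(sigma) = ||sigma||^(-1/2) + alpha  (with the MathComp convention 0^-1 = 0) *)
Definition cfun (alpha : R) (n : nat) (s : 'cV[R]_n) : R :=
  (Num.sqrt (enorm s))^-1 + alpha.

Definition Rmat (alpha : R) (n : nat) (s : 'cV[R]_n) : 'M[R]_(n + n) :=
  block_mx ((cfun alpha s)%:M) 0 0 1%:M.

Definition vfun (r : nat) (S : 'M[R]_r) (zeta : 'cV[R]_r) : R := qform S zeta.

Definition Vfun (alpha : R) (n : nat) (P : 'M[R]_(n + n)) (x : 'cV[R]_(n + n)) : R :=
  let Rs := Rmat alpha (G0 n *m x) in qform (Rs *m P *m Rs) x.

(* time derivative of v along the linear subsystem zeta' = A zeta + E sigma,
   sigma = G0 x:  vdot = grad v . (A zeta + E G0 x) *)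
Definition vdot (r n : nat) (A S : 'M[R]_r) (E : 'M[R]_(r, n))
  (zeta : 'cV[R]_r) (x : 'cV[R]_(n + n)) : R :=
  (zeta^T *m S *m (A *m zeta + E *m (G0 n *m x))) 0 0
  + ((A *m zeta + E *m (G0 n *m x))^T *m S *m zeta) 0 0.
End Defs.

(* Main.v *)
Require Import Defs.
From mathcomp Require Import all_boot all_order all_algebra.
From mathcomp Require Import ring lra.
Import Order.TTheory GRing.Theory Num.Theory.
Local Open Scope ring_scope.

Lemma e00D (R : rcfType) (M N : 'M[R]_1) : (M + N) 0 0 = M 0 0 + N 0 0.
Proof. by rewrite mxE. Qed.
Lemma e00Z (R : rcfType) (a : R) (M : 'M[R]_1) : (a *: M) 0 0 = a * M 0 0.
Proof. by rewrite mxE. Qed.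
Lemma e00N (R : rcfType) (M : 'M[R]_1) : (- M) 0 0 = - M 0 0.
Proof. by rewrite mxE. Qed.

Theorem lemma1 (R : rcfType) (r n : nat) (A : 'M[R]_r) (E : 'M[R]_(r, n))
  (alpha rho : R) (S : 'M[R]_r) (P : 'M[R]_(n + n)) :
  0 < alpha -> 0 < rho ->
  S^T = S -> posdef S -> P^T = P -> posdef P ->
  negdef (block_mx (A^T *m S + S *m A + rho *: S)
                   (alpha^-1 *: (S *m E *m G0 R n))
                   (alpha^-1 *: ((G0 R n)^T *m E^T *m S))
                   (- (rho *: P))) ->
  forall (zeta : 'cV[R]_r) (x : 'cV[R]_(n + n)),
    zeta != 0 -> x != 0 ->
    vdot A S E zeta x < rho * (Vfun alpha P x - vfun S zeta).
Proof.
move=> ha hr hS pS hP pP hneg zeta x hz hx.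
set s := G0 R n *m x.
set c := cfun alpha s.
have hc : alpha <= c.
  rewrite /c /cfun lerDr invr_ge0; exact: sqrtr_ge0.
have c0 : 0 < c by exact: lt_le_trans ha hc.
set Rs := Rmat alpha s.
set u := Rs *m x.
set k := alpha / c.
set y := k *: u.
have hG : G0 R n *m Rs = c *: G0 R n.
  rewrite /Rs /Rmat /G0 mul_row_block !mul0mx !mulmx0 !addr0 mul1mx.
  by rewrite scale_row_mx scaler0 scalemx1.
have hGy : G0 R n *m y = alpha *: s.
  rewrite /y -scalemxAr /u mulmxA hG -scalemxAl scalerA /s; congr (_ *: _).
  by rewrite /k mulrAC -mulrA divff ?mulr1 // gt_eqF.
have hRs : Rs^T = Rs.
  by rewrite /Rs /Rmat tr_block_mx !trmx0 tr_scalar_mx trmx1.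
have hV : Vfun alpha P x = (u^T *m P *m u) 0 0.
  by rewrite /Vfun /qform -/s -/Rs /u trmx_mul hRs !mulmxA.
have hw : col_mx zeta y != 0 by rewrite col_mx_eq0 negb_and hz.
have H := hneg _ hw.
move: H; rewrite /qform tr_col_mx mul_row_block mul_row_col !mulmxDl !mulmxDr.
have e21 : y^T *m (alpha^-1 *: ((G0 R n)^T *m E^T *m S)) *m zeta
    = s^T *m E^T *m S *m zeta.
  rewrite -(scalemxAr alpha^-1) -(scalemxAl alpha^-1) !mulmxA -trmx_mul hGy linearZ /=.
  by rewrite -!scalemxAl scalerA (mulVf (lt0r_neq0 ha)) scale1r.
have e12 : zeta^T *m (alpha^-1 *: (S *m E *m G0 R n)) *m y
    = zeta^T *m S *m E *m s.
  rewrite -(scalemxAr alpha^-1) -(scalemxAl alpha^-1) -!mulmxA hGy.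
  by rewrite -!scalemxAr scalerA (mulVf (lt0r_neq0 ha)) scale1r.
have e22 : y^T *m - (rho *: P) *m y = - ((rho * k^+2) *: (u^T *m P *m u)).
  have ->: y^T = k *: u^T by rewrite /y linearZ.
  rewrite mulmxN mulNmx /y; do 3 rewrite -?scalemxAl -?scalemxAr.
  by rewrite !scalerA; congr (- (_ *: _)); rewrite expr2; ring.
have hq : 0 <= (u^T *m P *m u) 0 0.
  have [->|u0] := eqVneq u 0; first by rewrite mulmx0 mxE.
  exact: ltW (pP _ u0).
have k1 : k <= 1 by rewrite /k ler_pdivrMr // mul1r.
have k0 : 0 < k by rewrite /k divr_gt0.
have hk2 : rho * k^+2 * (u^T *m P *m u) 0 0 <= rho * (u^T *m P *m u) 0 0.
  rewrite -mulrA ler_pM2l // ler_piMl // expr2 mulr_ile1 // ltW //.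
rewrite /vdot -/s hV /vfun /qform.
clearbody y u k s.
rewrite e21 e12 e22 !mulmxDl -!scalemxAr -!scalemxAl !mulmxA.
rewrite !e00D e00N !e00Z => H.
rewrite [(_ + _)^T]linearD /= !trmx_mul mulmxDr !mulmxDl !mulmxA !e00D.
move: H hk2; set q := (u^T *m P *m u) 0 0.
move=> H hk2; lra.
Qed.
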